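(* For every positive integer $n$, every triangle-free graph on $n$ vertices contains at most $\left(\frac{n}{5}\right)^5$ cycles of length 5.
   Context: Graphs are finite and simple. A cycle of length 5 is a subgraph isomorphic to $C_5$, counted as an unlabelled subgraph. *)

(* Defs.v *)
From HB Require Import structures.
From mathcomp Require Import all_boot all_order all_algebra.
Set Implicit Arguments. Unset Strict Implicit. Unset Printing Implicit Defensive.

Definition simple_graph (T : finType) (e : rel T) : Prop :=
  symmetric e /\ irreflexive e.

Definition triangle_free (T : finType) (e : rel T) : Prop :=
  forall x y z : T, ~ [&& e x y, e y z & e z x].

Definition cycle_edges (T : finType) (f : 'I_5 -> T) : {set {set T}} :=
  [set [set f i; f (ordS i)] | i : 'I_5].

(* A subgraph isomorphic to C_5 (no isolated
   vertices) is determined by its edge set. *)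
Definition is_C5 (T : finType) (e : rel T) (E : {set {set T}}) : bool :=
  [exists f : {ffun 'I_5 -> T},
     [&& injectiveb f, [forall i : 'I_5, e (f i) (f (ordS i))]
       & E == cycle_edges f]].

Definition num_C5 (T : finType) (e : rel T) : nat :=
  #|[set E : {set {set T}} | is_C5 e E]|.

(* Main.v *)
Require Import Defs.
From HB Require Import structures.
From mathcomp Require Import all_boot all_order all_algebra.
From mathcomp Require Import ssrZ.
From Stdlib Require BinIntDef.
Import GRing.Theory Num.Theory.
Local Open Scope ring_scope.

Set Implicit Arguments. Unset Strict Implicit. Unset Printing Implicit Defensive.
Import Order.TTheory.

Notation Z := BinNums.Z.
Definition PL : seq (seq nat) := [:: [:: 0; 1; 2; 3; 4]; [:: 0; 1; 2; 4; 3]; [:: 0; 1; 3; 2; 4]; [:: 0; 1; 3; 4; 2]; [:: 0; 1; 4; 2; 3]; [:: 0; 1; 4; 3; 2]; [:: 0; 2; 1; 3; 4]; [:: 0; 2; 1; 4; 3]; [:: 0; 2; 3; 1; 4]; [:: 0; 2; 3; 4; 1]; [:: 0; 2; 4; 1; 3]; [:: 0; 2; 4; 3; 1]; [:: 0; 3; 1; 2; 4]; [:: 0; 3; 1; 4; 2]; [:: 0; 3; 2; 1; 4]; [:: 0; 3; 2; 4; 1]; [:: 0; 3; 4; 1; 2]; [:: 0; 3; 4; 2; 1]; [:: 0; 4; 1; 2; 3]; [:: 0; 4; 1; 3; 2]; [:: 0; 4; 2; 1; 3]; [:: 0; 4; 2; 3; 1]; [:: 0; 4; 3; 1; 2]; [::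 0; 4; 3; 2; 1]; [:: 1; 0; 2; 3; 4]; [:: 1; 0; 2; 4; 3]; [:: 1; 0; 3; 2; 4]; [:: 1; 0; 3; 4; 2]; [:: 1; 0; 4; 2; 3]; [:: 1; 0; 4; 3; 2]; [:: 1; 2; 0; 3; 4]; [:: 1; 2; 0; 4; 3]; [:: 1; 2; 3; 0; 4]; [:: 1; 2; 3; 4; 0]; [:: 1; 2; 4; 0; 3]; [:: 1; 2; 4; 3; 0]; [:: 1; 3; 0; 2; 4]; [:: 1; 3; 0; 4; 2]; [:: 1; 3; 2; 0; 4]; [:: 1; 3; 2; 4; 0]; [:: 1; 3; 4; 0; 2]; [:: 1; 3; 4; 2; 0]; [:: 1; 4; 0; 2; 3]; [:: 1; 4; 0; 3; 2]; [:: 1; 4; 2; 0; 3]; [:: 1; 4; 2; 3; 0]; [:: 1; 4; 3; 0; 2]; [:: 1; 4; 3; 2; 0]; [:: 2; 0; 1; 3; 4]; [:: 2; 0; 1; 4; 3]; [:: 2; 0; 3; 1; 4]; [:: 2; 0; 3; 4; 1]; [:: 2; 0; 4; 1; 3]; [:: 2; 0; 4; 3; 1]; [:: 2; 1; 0; 3; 4]; [:: 2; 1; 0; 4; 3]; [:: 2; 1; 3; 0; 4]; [:: 2; 1; 3; 4; 0]; [:: 2; 1; 4; 0; 3]; [:: 2; 1; 4; 3; 0]; [:: 2; 3; 0; 1; 4]; [:: 2; 3; 0; 4; 1]; [:: 2; 3; 1; 0; 4]; [:: 2; 3; 1; 4; 0]; [:: 2; 3; 4; 0; 1]; [:: 2;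 3; 4; 1; 0]; [:: 2; 4; 0; 1; 3]; [:: 2; 4; 0; 3; 1]; [:: 2; 4; 1; 0; 3]; [:: 2; 4; 1; 3; 0]; [:: 2; 4; 3; 0; 1]; [:: 2; 4; 3; 1; 0]; [:: 3; 0; 1; 2; 4]; [:: 3; 0; 1; 4; 2]; [:: 3; 0; 2; 1; 4]; [:: 3; 0; 2; 4; 1]; [:: 3; 0; 4; 1; 2]; [:: 3; 0; 4; 2; 1]; [:: 3; 1; 0; 2; 4]; [:: 3; 1; 0; 4; 2]; [:: 3; 1; 2; 0; 4]; [:: 3; 1; 2; 4; 0]; [:: 3; 1; 4; 0; 2]; [:: 3; 1; 4; 2; 0]; [:: 3; 2; 0; 1; 4]; [:: 3; 2; 0; 4; 1]; [:: 3; 2; 1; 0; 4]; [:: 3; 2; 1; 4; 0]; [:: 3; 2; 4; 0; 1]; [:: 3; 2; 4; 1; 0]; [:: 3; 4; 0; 1; 2]; [:: 3; 4; 0; 2; 1]; [:: 3; 4; 1; 0; 2]; [:: 3; 4; 1; 2; 0]; [:: 3; 4; 2; 0; 1]; [:: 3; 4; 2; 1; 0]; [:: 4; 0; 1; 2; 3]; [:: 4; 0; 1; 3; 2]; [:: 4; 0; 2; 1; 3]; [:: 4; 0; 2; 3; 1]; [:: 4; 0; 3; 1; 2]; [:: 4; 0; 3; 2; 1]; [:: 4; 1; 0; 2; 3]; [:: 4; 1; 0; 3; 2]; [:: 4; 1; 2; 0; 3]; [:: 4; 1; 2; 3; 0]; [:: 4; 1; 3; 0; 2]; [:: 4; 1;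 3; 2; 0]; [:: 4; 2; 0; 1; 3]; [:: 4; 2; 0; 3; 1]; [:: 4; 2; 1; 0; 3]; [:: 4; 2; 1; 3; 0]; [:: 4; 2; 3; 0; 1]; [:: 4; 2; 3; 1; 0]; [:: 4; 3; 0; 1; 2]; [:: 4; 3; 0; 2; 1]; [:: 4; 3; 1; 0; 2]; [:: 4; 3; 1; 2; 0]; [:: 4; 3; 2; 0; 1]; [:: 4; 3; 2; 1; 0]].
Definition DL : seq (seq nat) := [:: [:: 0; 1; 2; 3; 4]; [:: 1; 2; 3; 4; 0]; [:: 2; 3; 4; 0; 1]; [:: 3; 4; 0; 1; 2]; [:: 4; 0; 1; 2; 3]; [:: 0; 4; 3; 2; 1]; [:: 1; 0; 4; 3; 2]; [:: 2; 1; 0; 4; 3]; [:: 3; 2; 1; 0; 4]; [:: 4; 3; 2; 1; 0]].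
Module ZData.
Import BinIntDef.
Local Open Scope Z_scope.
Definition Sc : Z := 669130445941831013810156281541260800000.
Definition Kc : Z := 2141217427013859244192500100932034560.
Definition dec : seq (seq (Z * seq Z)) := [:: [:: (328005120559721085201057000755520, [:: (-58); (104); (104); (-243); (272); (-75); (-75); (87)]); (1280936424992402051032505860800, [:: (526); (-840); (-4104); (-263); (0); (3841); (577); (-789)]); (946350495965414281251720038400, [:: (526); (-4681); (-263); (-263); (0); (0); (4418); (-789)]); (105392841327008180506268466375851520, [:: (-2); (1); (1); (1); (0); (0); (0); (3)])]; [:: (41690370463665483726489487946496, [:: (-762); (1070); (392); (0); (300); (-385); (-315); (0)]); (166439255456098927382545344, [:: (-277043); (0); (500968); (0); (101700); (-93065); (-130860); (0)]); (381497721463238033450560, [:: (-5103449); (0); (0); (0); (14004540); (2573787); (2529662); (0)]); (112131811134114266560, [:: (-8104903); (0); (0); (0); (0); (1278304626); (-1270199723); (0)]); (3036246476329565277695669933198624320, [:: (-1); (0); (0); (0); (0); (0); (1); (0)])]; [:: (261379080446027739769592297477055, [:: (-530); (-261); (256); (0); (-260); (9); (0); (0)]); (156720878070528684356393031225, [:: (2838); (-31937); (0); (0); (33356); (-1419); (0); (0)]); (15053261503177413262510914391006914720, [:: (-2); (-1); (0); (0); (0); (1); (0); (0)])]].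
End ZData.

Definition o0 : 'I_5 := @Ordinal 5 0 isT.
Definition o1 : 'I_5 := @Ordinal 5 1 isT.
Definition o2 : 'I_5 := @Ordinal 5 2 isT.
Definition o3 : 'I_5 := @Ordinal 5 3 isT.
Definition o4 : 'I_5 := @Ordinal 5 4 isT.
Definition ords : seq 'I_5 := [:: o0; o1; o2; o3; o4].
Definition ofnat (k : nat) : 'I_5 :=
  match k with 0 => o0 | 1 => o1 | 2 => o2 | 3 => o3 | _ => o4 end.

Definition adjT := 'I_5 -> 'I_5 -> bool.

Definition code (a : adjT) (w : 'I_5) : nat :=
  (a w o0 : nat) + (a w o1 : nat) * 2 + (a w o2 : nat) * 4.

Definition tyid (a : adjT) : nat :=
  match a o0 o1, a o1 o2, a o0 o2 with
  | false, false, false => 0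
  | true, false, false => 1
  | true, true, false => 2
  | _, _, _ => 3 end.

Definition walk4 (a : adjT) : bool :=
  [&& a o0 o1, a o1 o2, a o2 o3, a o3 o4 & a o4 o0].

Definition Qv (s p q : nat) : Z :=
  foldr (fun t acc => BinIntDef.Z.add (BinIntDef.Z.mul (BinIntDef.Z.mul t.1 (nth BinNums.Z0 t.2 p)) (nth BinNums.Z0 t.2 q)) acc)
    BinNums.Z0 (nth [::] ZData.dec s).

Definition Wz (a : adjT) : Z := if walk4 a then ZData.Sc else BinNums.Z0.
Definition Gz (a : adjT) : Z := Qv (tyid a) (code a o3) (code a o4).
Definition Fz (a : adjT) : Z := BinIntDef.Z.sub (BinIntDef.Z.sub ZData.Kc (Wz a)) (Gz a).

Definition pf (l : seq nat) (i : 'I_5) : 'I_5 := ofnat (nth 0 l i).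
Definition comp (a : adjT) (l : seq nat) : adjT := fun i j => a (pf l i) (pf l j).
Definition Phi (a : adjT) : Z := foldr (fun l acc => BinIntDef.Z.add (Fz (comp a l)) acc) BinNums.Z0 PL.

Definition pidx (i j : nat) : nat :=
  nth 0 [:: 0; 0; 1; 2; 3;  0; 0; 4; 5; 6;  1; 4; 0; 7; 8;  2; 5; 7; 0; 9;  3; 6; 8; 9; 0] (i * 5 + j).
Definition mkA (b : seq bool) : adjT := fun i j => (val i != val j) && nth false b (pidx i j).

Definition trifreeL (a : adjT) : bool :=
  all (fun i => all (fun j => all (fun k => ~~ [&& a i j, a j k & a k i]) ords) ords) ords.

Definition checkb (b : seq bool) : bool := trifreeL (mkA b) ==> BinIntDef.Z.leb BinNums.Z0 (Phi (mkA b)).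
Lemma check_all (b0 b1 b2 b3 b4 b5 b6 b7 b8 b9 : bool) :
  checkb [:: b0; b1; b2; b3; b4; b5; b6; b7; b8; b9].
Proof.
case: b0; case: b1; case: b2; case: b3; case: b4; case: b5; case: b6; case: b7; case: b8; case: b9;
 vm_compute; reflexivity.
Qed.

Lemma ord5P (P : 'I_5 -> Prop) : P o0 -> P o1 -> P o2 -> P o3 -> P o4 -> forall i, P i.
Proof.
move=> H0 H1 H2 H3 H4 [[|[|[|[|[|i]]]]] Hi] //;
  first [ by rewrite (bool_irrelevance Hi isT) | by [] ].
Qed.

Lemma Fz_ext (a a' : adjT) : (forall i j, a i j = a' i j) -> Fz a = Fz a'.
Proof. by move=> H; rewrite /Fz /Wz /Gz /walk4 /tyid /code !H. Qed.

Lemma Phi_ext (a a' : adjT) : (forall i j, a i j = a' i j) -> Phi a = Phi a'.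
Proof.
move=> H; rewrite /Phi; elim: PL => //= l s ->; congr BinIntDef.Z.add.
by apply: Fz_ext => i j; rewrite /comp H.
Qed.

Definition bits (a : adjT) : seq bool :=
  [:: a o0 o1; a o0 o2; a o0 o3; a o0 o4; a o1 o2; a o1 o3; a o1 o4; a o2 o3; a o2 o4; a o3 o4].

Lemma mkA_bits (a : adjT) : (forall i j, a i j = a j i) -> (forall i, a i i = false) ->
  forall i j, mkA (bits a) i j = a i j.
Proof.
move=> sym irr i j.
elim/ord5P: i; elim/ord5P: j; by rewrite /mkA /= ?irr // sym.
Qed.

Lemma Zleb_le (x : Z) : BinIntDef.Z.leb BinNums.Z0 x = (0 <= x)%R.
Proof. by []. Qed.

Lemma Phi_nonneg (a : adjT) : (forall i j, a i j = a j i) -> (forall i, a i i = false) ->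
  (forall i j k, ~~ [&& a i j, a j k & a k i]) -> (0 <= Phi a)%R.
Proof.
move=> sym irr tri.
have E := mkA_bits sym irr.
have := check_all (a o0 o1) (a o0 o2) (a o0 o3) (a o0 o4) (a o1 o2) (a o1 o3) (a o1 o4) (a o2 o3) (a o2 o4) (a o3 o4).
rewrite /checkb -/(bits a) (Phi_ext E) -Zleb_le => /implyP; apply.
rewrite /trifreeL; apply/allP => i _; apply/allP => j _; apply/allP => k _.
by rewrite !E.
Qed.

Lemma foldr_sumZ (A : Type) (f : A -> Z) (s : seq A) :
  foldr (fun l acc => BinIntDef.Z.add (f l) acc) BinNums.Z0 s = \sum_(l <- s) f l.
Proof. by elim: s => [|l s IH]; rewrite ?big_nil ?big_cons //= IH. Qed.

Lemma Qv_sum s p q :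
  Qv s p q = \sum_(t <- nth [::] ZData.dec s) t.1 * nth 0 t.2 p * nth 0 t.2 q.
Proof. by rewrite /Qv foldr_sumZ. Qed.

Lemma dec_nonneg s : all (fun t : Z * seq Z => 0 <= t.1)%R (nth [::] ZData.dec s).
Proof.
have H : all (fun ts => all (fun t : Z * seq Z => BinIntDef.Z.leb BinNums.Z0 t.1) ts) ZData.dec.
  by vm_compute.
case: (ltnP s (size ZData.dec)) => Hs; last by rewrite nth_default.
exact: (allP H) _ (mem_nth _ Hs).
Qed.

Lemma sos_nonneg (W : finType) s (c : W -> nat) :
  (0 <= \sum_(w : W) \sum_(w' : W) Qv s (c w) (c w'))%R.
Proof.
under eq_bigr do under eq_bigr do rewrite Qv_sum.
under eq_bigr do rewrite exchange_big.
rewrite exchange_big /= big_seq; apply: sumr_ge0 => t Ht.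
have d0 : (0 <= t.1)%R by exact: (allP (dec_nonneg s)).
have -> : \sum_(w : W) \sum_(w' : W) t.1 * nth 0 t.2 (c w) * nth 0 t.2 (c w') =
  t.1 * (\sum_(w : W) nth 0 t.2 (c w)) ^+ 2.
  rewrite expr2 mulrA; under eq_bigr do rewrite -big_distrr /=.
  by rewrite -big_distrl -big_distrr.
by rewrite mulr_ge0 // sqr_ge0.
Qed.

Lemma pair_sum (A B : finType) (F : A * B -> Z) :
  \sum_(x : A * B) F x = \sum_(a : A) \sum_(b : B) F (a, b).
Proof. by rewrite pair_big; apply: eq_bigr => -[a b]. Qed.

Lemma PL_surj : all (fun l => all (fun j => has (fun i => pf l i == j) ords) ords) PL.
Proof. by vm_compute. Qed.

Lemma mem_ords (i : 'I_5) : i \in ords.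
Proof. by elim/ord5P: i. Qed.

Section Graph.
Variables (T : finType) (e : rel T).
Hypothesis esym : symmetric e.
Hypothesis eirr : irreflexive e.
Hypothesis etri : forall x y z : T, ~ [&& e x y, e y z & e z x].

Definition P5 := (T * T * T * T * T)%type.
Definition tf (x : P5) (i : 'I_5) : T :=
  let: (x0, x1, x2, x3, x4) := x in
  match val i with 0 => x0 | 1 => x1 | 2 => x2 | 3 => x3 | _ => x4 end.
Definition ax (x : P5) : adjT := fun i j => e (tf x i) (tf x j).
Definition mkx (g : 'I_5 -> T) : P5 := (g o0, g o1, g o2, g o3, g o4).

Lemma tf_mkx g i : tf (mkx g) i = g i.
Proof. by elim/ord5P: i. Qed.

Lemma mkx_tf x : mkx (tf x) = x.
Proof. by case: x => [[[[x0 x1] x2] x3] x4]. Qed.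

Definition permx (l : seq nat) (x : P5) : P5 := mkx (fun i => tf x (pf l i)).

Lemma permx_inj l : l \in PL -> injective (permx l).
Proof.
move=> Hl x y Exy.
have H1 i : tf x (pf l i) = tf y (pf l i).
  by move: (congr1 (tf^~ i) Exy); rewrite /permx !tf_mkx.
have H2 j : tf x j = tf y j.
  have /allP := (allP PL_surj) l Hl; move/(_ j (mem_ords j))=> /hasP [i _ /eqP <-].
  exact: H1.
by rewrite -[x]mkx_tf -[y]mkx_tf /mkx !H2.
Qed.

Lemma ax_permx l x i j : ax (permx l x) i j = comp (ax x) l i j.
Proof. by rewrite /ax /permx !tf_mkx. Qed.

Lemma ax_ok x : [/\ forall i j, ax x i j = ax x j i, forall i, ax x i i = false &
   forall i j k, ~~ [&& ax x i j, ax x j k & ax x k i]].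
Proof.
split=> [i j|i|i j k]; rewrite /ax.
- exact: esym.
- exact: eirr.
- by apply/negP; apply: etri.
Qed.

Lemma sum_const_seq (A : eqType) (s : seq A) (c : Z) : \sum_(l <- s) c = c *+ size s.
Proof. by elim: s => [|l s IH]; rewrite ?big_nil ?big_cons ?IH ?mulrS. Qed.

Lemma sumF_nonneg : (0 <= \sum_(x : P5) Fz (ax x))%R.
Proof.
have E : \sum_(l <- PL) \sum_(x : P5) Fz (ax x) = \sum_(x : P5) Phi (ax x).
  rewrite big_seq; under eq_bigr => l Hl do rewrite (reindex_inj (permx_inj Hl)) /=.
  rewrite -big_seq exchange_big /=; apply: eq_bigr => x _; rewrite /Phi foldr_sumZ.
  by apply: eq_bigr => l _; apply: Fz_ext => i j; exact: ax_permx.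
have : (0 <= \sum_(x : P5) Phi (ax x))%R.
  apply: sumr_ge0 => x _; have [h1 h2 h3] := ax_ok x; exact: Phi_nonneg.
by rewrite -E sum_const_seq pmulrn_lge0.
Qed.

Lemma sumG_nonneg : (0 <= \sum_(x : P5) Gz (ax x))%R.
Proof.
rewrite pair_sum pair_sum; apply: sumr_ge0 => -[[x0 x1] x2] _.
exact: (sos_nonneg (tyid (ax (x0, x1, x2, x0, x0))) (fun w => code (ax (x0, x1, x2, w, w)) o3)).
Qed.

Definition hom := #|[set x : P5 | walk4 (ax x)]|.

Lemma KS : ZData.Kc *+ 625 = ZData.Sc *+ 2.
Proof. by vm_compute. Qed.

Lemma Sc_gt0 : (0 < ZData.Sc)%R.
Proof. by vm_compute. Qed.

Lemma main_ineq : (625 * hom <= 2 * #|T| ^ 5)%N.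
Proof.
have H0 : (0 <= \sum_(x : P5) (ZData.Kc - Wz (ax x)))%R.
  have Ea a : (ZData.Kc - Wz a = Fz a + Gz a)%R.
    change (ZData.Kc - Wz a = (ZData.Kc - Wz a - Gz a) + Gz a)%R; by rewrite subrK.
  under eq_bigr do rewrite Ea.
  by rewrite big_split /= addr_ge0 // ?sumF_nonneg ?sumG_nonneg.
have EW : \sum_(x : P5) Wz (ax x) = ZData.Sc *+ hom.
  rewrite /hom -sum1_card.
  rewrite -sumrMnr [RHS]big_mkcond /=; apply: eq_bigr => x _.
  by rewrite inE /Wz; case: (walk4 _).
have EN : #|{: P5}| = (#|T| ^ 5)%N.
  by rewrite !card_prod !expnS expn0 muln1 !mulnA.
rewrite sumrB sumr_const EW subr_ge0 EN in H0.
move: H0; set N := (#|T| ^ 5)%N => H0.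
rewrite -(ler_pMn2l Sc_gt0) mulnC mulrnA [X in (_ <= X)%R]mulrnA -KS mulrnAC.
rewrite (mulrnAC ZData.Sc) (mulrnAC ZData.Kc); exact: ler_wMn2r.
Qed.

End Graph.

Definition drel (l : seq nat) (i j : 'I_5) : bool :=
  ((pf l i == j) && (pf l (ordS i) == ordS j)) || ((pf l i == ordS j) && (pf l (ordS i) == j)).

Lemma DL_facts :
  all (fun k => let l := nth [::] DL k in
    [&& all (fun i => (pf l (ordS i) == ordS (pf l i)) || (pf l i == ordS (pf l (ordS i)))) ords,
        all (fun i => has (fun j => drel l i j) ords) ords,
        all (fun j => has (fun i => drel l i j) ords) ords &
        all (fun k' => all (fun i => pf l i == pf (nth [::] DL k') i) ords ==> (k == k')) (iota 0 10)])
   (iota 0 10).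
Proof. by vm_compute. Qed.

Lemma ordS_vals : [/\ ordS o0 = o1, ordS o1 = o2, ordS o2 = o3, ordS o3 = o4 & ordS o4 = o0].
Proof. by split; apply: val_inj. Qed.

Section PartA.
Variables (T : finType) (e : rel T).
Hypothesis esym : symmetric e.

Definition ce (x : P5 T) : {set {set T}} := cycle_edges [ffun i => tf x i].

Definition AE (E : {set {set T}}) := [set x : P5 T | walk4 (ax e x) && (ce x == E)].

Lemma walk4_forall (a : adjT) : (forall i, a i (ordS i)) -> walk4 a.
Proof.
move=> H; have [h0 h1 h2 h3 h4] := ordS_vals.
move: (H o0) (H o1) (H o2) (H o3) (H o4); rewrite h0 h1 h2 h3 h4 /walk4.
by move=> -> -> -> -> ->.
Qed.

Lemma set2_eq (U : finType) (a b c d : U) :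
  ((a == c) && (b == d)) || ((a == d) && (b == c)) -> [set a; b] = [set c; d].
Proof. by case/orP => /andP [/eqP -> /eqP ->] //; rewrite setUC. Qed.

Lemma imset_pair (U V : finType) (h : U -> V) (a b : U) : h @: [set a; b] = [set h a; h b].
Proof. by rewrite imsetU1 imset_set1. Qed.

Lemma AE_big (E : {set {set T}}) : is_C5 e E -> (10 <= #|AE E|)%N.
Proof.
rewrite /is_C5 => /existsP [f /and3P [/injectiveP finj /forallP fe /eqP ->]].
pose g (k : 'I_10) : P5 T := mkx (fun i => f (pf (nth [::] DL k) i)).
have Hk (k : 'I_10) : val k \in iota 0 10 by rewrite mem_iota leq0n add0n ltn_ord.
have ginj : injective g.
  move=> k k' Ekk.
  have /and4P [_ _ _ /allP H] := (allP DL_facts) _ (Hk k).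
  apply: val_inj; apply/eqP; apply: (implyP (H _ (Hk k'))).
  apply/allP => i _; apply/eqP; apply: finj.
  by move: (congr1 (fun y => tf y i) Ekk); rewrite !tf_mkx.
have -> : (10 = #|g @: 'I_10|)%N by rewrite card_imset // card_ord.
apply: subset_leq_card; apply/subsetP => x /imsetP [k _ ->].
have /and4P [Hw /allP Hf /allP Hb _] := (allP DL_facts) _ (Hk k).
set l := nth [::] DL k in Hw Hf Hb *.
rewrite inE; apply/andP; split.
  apply: walk4_forall => i; rewrite /ax /g !tf_mkx.
  case/orP: ((allP Hw) i (mem_ords i)) => /eqP ->; first exact: fe.
  by rewrite esym; apply: fe.
apply/eqP; rewrite /ce /cycle_edges.
have Eg i : [ffun i0 => tf (g k) i0] i = f (pf l i) by rewrite ffunE tf_mkx.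
apply/eqP; rewrite eqEsubset; apply/andP; split; apply/subsetP => y /imsetP [i _ ->].
- rewrite !Eg; case/hasP: (Hf i (mem_ords i)) => j _ Hj.
  apply/imsetP; exists j => //.
  by rewrite -imset_pair (set2_eq Hj) imset_pair.
- case/hasP: (Hb i (mem_ords i)) => j _ Hj.
  apply/imsetP; exists j => //; rewrite !Eg.
  by rewrite -[RHS]imset_pair (set2_eq Hj) imset_pair.
Qed.

End PartA.

Lemma card_sumn (U : finType) (A : {set U}) : #|A| = (\sum_(x : U) (x \in A : nat))%N.
Proof. by rewrite -sum1_card big_mkcond; apply: eq_bigr => x _; case: (x \in A). Qed.

Lemma C5_le_hom (T : finType) (e : rel T) : symmetric e -> (10 * num_C5 e <= hom e)%N.
Proof.
move=> esym; rewrite /num_C5.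
set CS := [set E | is_C5 e E].
have H1 : (10 * #|CS| <= \sum_(E in CS) #|AE e E|)%N.
  rewrite mulnC -sum_nat_const; apply: leq_sum => E; rewrite inE; exact: AE_big.
apply: (leq_trans H1); rewrite /hom card_sumn.
under eq_bigr do rewrite card_sumn.
rewrite exchange_big /=; apply: leq_sum => x _.
rewrite inE; case W: (walk4 (ax e x)); last first.
  by rewrite big1 // => E _; rewrite inE W.
case: (boolP (ce x \in CS)) => Hc.
  rewrite (bigD1 (ce x)) //= inE W eqxx big1 ?addn0 // => E /andP [_ HE].
  by rewrite inE W eq_sym (negbTE HE).
rewrite big1 // => E HE; rewrite inE W /=; case: eqP => // Ex.
by rewrite Ex HE in Hc.
Qed.

Unset Implicit Arguments.

Theorem theorem2 (n : nat) (T : finType) (e : rel T) :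
  (0 < n)%N -> #|T| = n -> simple_graph e -> triangle_free e ->
  (num_C5 e)%:R <= ((n%:R / 5%:R) ^+ 5 : rat).
Proof.
move=> _ HT [esym eirr] etri.
have H1 := C5_le_hom esym.
have H2 := main_ineq esym eirr etri.
have H : (3125 * num_C5 e <= n ^ 5)%N.
  rewrite -HT; rewrite -(leq_pmul2l (isT : (0 < 2)%N)) mulnA.
  apply: leq_trans H2; rewrite (_ : 2 * 3125 = 625 * 10)%N // -mulnA leq_mul2l /=.
  exact: H1.
rewrite expr_div_n -natrX ler_pdivlMr; last by rewrite exprn_gt0 // ltr0n.
by rewrite -natrX -natrM ler_nat mulnC.
Qed.
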